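(* Let $r\ge2$ and let $P,Q$ be a harmonious pair of $r$-patterns. Then for every $k\ge1$, the number of $\{P,Q\}$-cliques among the ordered $r$-matchings on $[rk]$ equals $k!$.
   Context: An ordered $r$-matching of size $k$ is a set of $k$ pairwise disjoint $r$-element subsets (edges) of $[rk]$ (with its natural order). An $r$-pattern is an ordered $r$-matching of size 2, written as a word over $\{A,B\}$ (each letter $r$ times, starting with $A$). Two edges form pattern $P$ if they induce a matching order-isomorphic to $P$; a $\mathcal P$-clique is an ordered matching all of whose pairs of edges form patterns in $\mathcal P$. An $r$-pattern is collectable if it splits into consecutive blocks $S_1\cdots S_s$ each of the form $A^tB^t$ or $B^tA^t$ ($t\ge1$; $W^t$ is $t$ repetitions of $W$); this splitting is unique and its composition is $(|S_1|/2,\dots,|S_s|/2)$. Two distinct collectable $r$-patterns are harmonious if they have the same composition. *)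

(* Defs.v *)
From mathcomp Require Import all_boot.
Set Implicit Arguments. Unset Strict Implicit. Unset Printing Implicit Defensive.

(* Words over {A,B}: A = true, B = false. *)

Definition is_pattern (r : nat) (w : seq bool) : bool :=
  [&& size w == 2 * r, count id w == r & head false w].

Definition is_block (b : seq bool) : Prop :=
  exists2 t, 1 <= t & (b = nseq t true ++ nseq t false \/ b = nseq t false ++ nseq t true).

Definition is_splitting (w : seq bool) (bs : seq (seq bool)) : Prop :=
  (forall b, b \in bs -> is_block b) /\ flatten bs = w.

Definition collectable (w : seq bool) : Prop := exists bs, is_splitting w bs.

Definition composition_of (bs : seq (seq bool)) : seq nat :=
  [seq (size b)./2 | b <- bs].

(* Two distinct collectable patterns with the same composition
   (the splitting is unique, so comparing some splittings is the same
   as comparing "the" compositions). *)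
Definition harmonious (P Q : seq bool) : Prop :=
  P <> Q /\
  exists bsP bsQ, [/\ is_splitting P bsP, is_splitting Q bsQ &
                     composition_of bsP = composition_of bsQ].

(* The word induced by two edges e, f of an ordered matching on 'I_n:
   list the elements of e ∪ f in increasing order, and write A for those
   belonging to the edge containing the minimum of e ∪ f, B for the others. *)
Definition pattern_of (n : nat) (e f : {set 'I_n}) : seq bool :=
  let s := sort leq [seq val x | x <- enum (e :|: f)] in
  let E := if head 0 s \in [seq val y | y <- enum e] then e else f in
  [seq (x \in [seq val y | y <- enum E]) | x <- s].

(* Ordered r-matching of size k: k pairwise disjoint r-element subsets of [rk]
   (here [rk] is represented by 'I_(r*k) with its natural order). *)
Definition is_matching (r k : nat) (M : {set {set 'I_(r * k)}}) : bool :=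
  [&& [forall e in M, #|e| == r],
      [forall e in M, forall f in M, (e != f) ==> [disjoint e & f]]
    & #|M| == k].

Definition is_clique2 (n : nat) (P Q : seq bool) (M : {set {set 'I_n}}) : bool :=
  [forall e in M, forall f in M, (e != f) ==> (pattern_of e f \in [:: P; Q])].

(* Main.v *)
Require Import Defs.
From mathcomp Require Import all_boot zify fingroup perm.
Set Implicit Arguments. Unset Strict Implicit. Unset Printing Implicit Defensive.

Fixpoint fa (w : seq bool) : seq nat :=
  match w with [::] => [::] | b :: w' => if b then 0 :: fa w' else map S (fa w') end.

Lemma size_fa w : size (fa w) = count id w.
Proof. elim: w => //= [[]] w IH /=; by rewrite ?size_map IH. Qed.

Lemma fa_inj w1 w2 : fa w1 = fa w2 -> count negb w1 = count negb w2 -> w1 = w2.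
Proof.
elim: w1 w2 => [|b1 w1 IH] [|b2 w2] //=.
- by case: b2 => //=.
- by case: b1.
case: b1; case: b2 => //=.
- by move=> [] /IH H /= /H ->.
- by case: (fa w2).
- by case: (fa w1).
- move=> /(inj_map succn_inj) H [] /(IH _ H) ->. done.
Qed.

Lemma fa_cat u v : fa (u ++ v) = fa u ++ map (addn (count negb u)) (fa v).
Proof.
elim: u => [|b u IH] /=; first by rewrite map_id_in.
case: b => /=; first by rewrite IH.
rewrite IH map_cat -map_comp; congr (_ ++ _); apply: eq_map => x /=; by rewrite addSn.
Qed.

Definition blk (t : nat) (o : bool) : seq bool :=
  if o then nseq t true ++ nseq t false else nseq t false ++ nseq t true.

Fixpoint word (ts : seq nat) (os : seq bool) : seq bool :=
  match ts, os with t :: ts', o :: os' => blk t o ++ word ts' os' | _, _ => [::] end.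

Lemma fa_true t : fa (nseq t true) = nseq t 0.
Proof. by elim: t => //= t ->. Qed.
Lemma fa_false t : fa (nseq t false) = [::].
Proof. by elim: t => //= t ->. Qed.
Lemma cnegb_nseq t b : count negb (nseq t b) = (~~ b) * t.
Proof. by elim: t => [|t IH] /=; [rewrite muln0 | rewrite IH mulnS; case: (b)]. Qed.
Lemma cid_nseq t b : count id (nseq t b) = b * t.
Proof. by elim: t => [|t IH] /=; [rewrite muln0 | rewrite IH mulnS; case: (b)]. Qed.

Lemma fa_blk t o : fa (blk t o) = nseq t ((~~ o) * t).
Proof.
case: o; rewrite /blk fa_cat ?fa_true ?fa_false /= ?cats0 ?mul0n //.
by rewrite cnegb_nseq mul1n map_nseq addn0.
Qed.

Lemma cnegb_blk t o : count negb (blk t o) = t.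
Proof. by case: o; rewrite /blk count_cat !cnegb_nseq /=; lia. Qed.
Lemma cid_blk t o : count id (blk t o) = t.
Proof. by case: o; rewrite /blk count_cat !cid_nseq /=; lia. Qed.

Lemma cnegb_word ts os : size ts = size os -> count negb (word ts os) = sumn ts.
Proof.
elim: ts os => [|t ts IH] [|o os] //= [] /IH H.
by rewrite count_cat cnegb_blk H.
Qed.
Lemma cid_word ts os : size ts = size os -> count id (word ts os) = sumn ts.
Proof.
elim: ts os => [|t ts IH] [|o os] //= [] /IH H.
by rewrite count_cat cid_blk H.
Qed.
Lemma size_word ts os : size ts = size os -> size (word ts os) = (sumn ts).*2.
Proof.
move=> H; rewrite -[size _](count_predC id) cid_word // -addnn; congr (_ + _).
by rewrite -(cnegb_word H); apply: eq_count.
Qed.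

Lemma negb_word ts os : map negb (word ts os) = word ts (map negb os).
Proof.
elim: ts os => [|t ts IH] [|o os] //=.
by rewrite map_cat IH; case: o; rewrite /blk /= map_cat !map_nseq.
Qed.

Definition cc (ts : seq nat) (i : nat) := sumn (take i ts).

Fixpoint bidx (ts : seq nat) (j : nat) : nat :=
  match ts with [::] => 0 | t :: ts' => if j < t then 0 else (bidx ts' (j - t)).+1 end.

Lemma cc0 ts : cc ts 0 = 0. Proof. by case: ts. Qed.
Lemma ccS t ts i : cc (t :: ts) i.+1 = t + cc ts i. Proof. by []. Qed.

Lemma ccSn ts i : i < size ts -> cc ts i.+1 = cc ts i + nth 0 ts i.
Proof.
elim: ts i => [|t ts IH] [|i] //=; first by rewrite cc0 /cc /= take0 /=; lia.
move=> /IH; rewrite !ccS => ->; lia.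
Qed.

Lemma cc_mono ts i i' : i <= i' -> cc ts i <= cc ts i'.
Proof.
elim: ts i i' => [|t ts IH] [|i] [|i'] //=; rewrite ?cc0 //.
by rewrite !ccS ltnS leq_add2l => /IH.
Qed.

Lemma cc_size ts : cc ts (size ts) = sumn ts.
Proof. by rewrite /cc take_size. Qed.

Lemma bidx_cu ts i u : i < size ts -> u < nth 0 ts i -> bidx ts (cc ts i + u) = i.
Proof.
elim: ts i => [|t ts IH] [|i] //=; first by rewrite add0n => _ ->.
rewrite ccS => /IH H /H {}H; rewrite ltnNge -addnA leq_addr /=.
by rewrite addKn H.
Qed.

Lemma bidx_lt ts j : j < sumn ts -> bidx ts j < size ts.
Proof.
elim: ts j => [|t ts IH] j //=; case: ifP => // /negbT; rewrite -leqNgt => H1 H2.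
rewrite ltnS; apply: IH; lia.
Qed.

Lemma cc_bidx_le ts j : cc ts (bidx ts j) <= j.
Proof.
elim: ts j => [|t ts IH] j //=.
case: ifP => Hjt; first by rewrite cc0.
rewrite ccS; have := IH (j - t); move: Hjt => /negbT; lia.
Qed.

Lemma bidx_lt_next ts j : j < sumn ts -> j < cc ts (bidx ts j).+1.
Proof.
elim: ts j => [|t ts IH] j //=.
case: ifP => [H _|/negbT]; first by rewrite /cc /= take0 /=; lia.
rewrite -leqNgt ccS => H1 H2; have := IH (j - t); lia.
Qed.

Lemma bidx_ltE ts j i : j < sumn ts -> i <= size ts -> (bidx ts j < i) = (j < cc ts i).
Proof.
move=> Hj Hi; apply/idP/idP => H.
- apply: (leq_trans (bidx_lt_next Hj)); exact: cc_mono.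
- rewrite ltnNge; apply/negP => H'; have := cc_mono ts H'; have := cc_bidx_le ts j; lia.
Qed.

Lemma cc_le_sum ts i : cc ts i <= sumn ts.
Proof. by rewrite /cc -{2}(cat_take_drop i ts) sumn_cat leq_addr. Qed.

Lemma fa_word ts os j : size ts = size os -> j < sumn ts ->
  nth 0 (fa (word ts os)) j =
  cc ts (bidx ts j) + (~~ nth true os (bidx ts j)) * nth 0 ts (bidx ts j).
Proof.
elim: ts os j => [|t ts IH] [|o os] j //= [] Hs Hj.
rewrite fa_cat fa_blk nth_cat size_nseq cnegb_blk.
case: ifP => Hjt; first by rewrite nth_nseq Hjt cc0.
rewrite ccS (nth_map 0); last first.
  rewrite size_fa cid_word //; move: Hjt => /negbT; lia.
rewrite IH //; last by move: Hjt => /negbT; lia.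
by rewrite addnA.
Qed.

Lemma sorted_cons_all x l : sorted ltn (x :: l) -> all (fun y => x < y) l /\ sorted ltn l.
Proof.
move=> H; split; first exact: (order_path_min ltn_trans H).
exact: (path_sorted H).
Qed.

Lemma fa_map (E : pred nat) s : sorted ltn s ->
  fa (map E s) = [seq count (fun b => ~~ E b && (b < a)) s | a <- filter E s].
Proof.
elim: s => [|x s IH] //= /sorted_cons_all [Hall Hs].
have Hx : forall a, a \in s -> x < a by move=> a; move/allP: Hall => /[apply].
case: (boolP (E x)) => Ex /=.
- rewrite IH //=; congr (_ :: _).
  rewrite add0n; apply/esym/eqP; rewrite -leqn0 leqNgt -has_count; apply/hasP => -[b bs].
  by have := Hx b bs; lia.
- rewrite IH // -map_comp; apply/eq_in_map => a; rewrite mem_filter => /andP[_ /Hx] /= ->.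
  by [].
Qed.

Lemma count_lt_nth l p : sorted ltn l -> p < size l -> count (fun x => x < nth 0 l p) l = p.
Proof.
elim: l p => [|x l IH] [|p] //= /sorted_cons_all [Hall Hs] Hp.
- rewrite ltnn add0n; apply/eqP; rewrite eqn0Ngt -has_count; apply/hasP => -[b bs].
  by move/allP: Hall => /(_ b bs); lia.
- have Hx : x < nth 0 l p by move/allP: Hall; apply; apply: mem_nth.
  by rewrite Hx IH.
Qed.

Lemma nth_lt_count l p a : sorted ltn l -> p < size l ->
  (nth 0 l p < a) = (p < count (fun x => x < a) l).
Proof.
elim: l p => [|x l IH] [|p] //= /sorted_cons_all [Hall Hs] Hp.
- case: ltnP => Hxa //=; rewrite add0n.
  suff -> : count (fun y => y < a) l = 0 by [].
  apply/eqP; rewrite eqn0Ngt -has_count; apply/hasP => -[b bs]; move/allP: Hall => /(_ b bs); lia.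
- rewrite IH //; have Hx : x < nth 0 l p by move/allP: Hall; apply; apply: mem_nth.
  case: (ltnP (nth 0 l p) a) => H.
  + have -> : x < a by lia.
    move: H; rewrite IH // => H; lia.
  + move: H; rewrite leqNgt IH // => H; case: (x < a) => /=; lia.
Qed.

Section SetGlue.
Variable n : nat.
Implicit Types (e f E : {set 'I_n}).

Definition inS E (x : nat) := x \in [seq val y | y <- enum E].
Lemma inS_val E (y : 'I_n) : inS E (val y) = (y \in E).
Proof. by rewrite /inS (mem_map val_inj) mem_enum. Qed.

Definition sl E := sort leq [seq val x | x <- enum E].
Definition el E j := nth 0 (sl E) j.
Definition cnt E a := \sum_(x in E) (val x < a).

Lemma sl_sorted E : sorted ltn (sl E).
Proof.
rewrite ltn_sorted_uniq_leq sort_uniq (map_inj_uniq val_inj) enum_uniq /=.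
exact: (sort_sorted leq_total).
Qed.

Lemma size_sl E : size (sl E) = #|E|.
Proof. by rewrite size_sort size_map cardE. Qed.

Lemma mem_sl E x : (x \in sl E) = inS E x.
Proof. by rewrite mem_sort. Qed.

Lemma count_sl (P : pred nat) E : count P (sl E) = \sum_(x in E) P (val x).
Proof.
rewrite count_sort count_map -sum1_count big_enum_cond /= big_mkcond /=.
rewrite [RHS]big_mkcond; apply: eq_bigr => x _; by case: (x \in E); case: (P (val x)).
Qed.

Lemma cnt_count E a : cnt E a = count (fun x => x < a) (sl E).
Proof. by rewrite count_sl. Qed.

Lemma el_mem E j : j < #|E| -> exists2 y, y \in E & val y = el E j.
Proof.
move=> Hj; have : el E j \in sl E by apply: mem_nth; rewrite size_sl.
rewrite mem_sl => /mapP [y]; rewrite mem_enum => yE ->; by exists y.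
Qed.

Lemma cnt_el E j : j < #|E| -> cnt E (el E j) = j.
Proof. move=> Hj; rewrite cnt_count count_lt_nth // ?size_sl //; exact: sl_sorted. Qed.

Lemma el_lt_cnt E p a : p < #|E| -> (el E p < a) = (p < cnt E a).
Proof. move=> Hp; rewrite cnt_count nth_lt_count // ?size_sl //; exact: sl_sorted. Qed.

Lemma filter_sl e f : [seq x <- sl (e :|: f) | inS e x] = sl e.
Proof.
apply: (irr_sorted_eq ltn_trans ltnn).
- by apply: sorted_filter; [exact: ltn_trans | exact: sl_sorted].
- exact: sl_sorted.
move=> x; rewrite mem_filter !mem_sl; apply/andP/idP => [[]//|H]; split => //.
move: H; rewrite /inS => /mapP [y]; rewrite mem_enum => ye ->.
by rewrite (mem_map val_inj) mem_enum inE ye.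
Qed.

Lemma count_pat e f a : [disjoint e & f] ->
  count (fun b => ~~ inS e b && (b < a)) (sl (e :|: f)) = cnt f a.
Proof.
move=> D; rewrite count_sl /cnt big_mkcond [RHS]big_mkcond /=.
apply: eq_bigr => x _; rewrite inS_val in_setU.
case: (boolP (x \in e)) => xe /=.
- by rewrite (disjointFr D xe).
- by case: (x \in f).
Qed.

Lemma fa_pat e f : [disjoint e & f] ->
  fa [seq inS e x | x <- sl (e :|: f)] = [seq cnt f a | a <- sl e].
Proof.
move=> D; rewrite fa_map ?sl_sorted // filter_sl; apply: eq_map => a.
exact: count_pat.
Qed.

Lemma pattern_ofE e f : pattern_of e f =
  [seq inS (if head 0 (sl (e :|: f)) \in [seq val y | y <- enum e] then e else f) x
     | x <- sl (e :|: f)].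
Proof. by []. Qed.

Lemma negb_pat e f : [disjoint e & f] ->
  [seq ~~ inS f x | x <- sl (e :|: f)] = [seq inS e x | x <- sl (e :|: f)].
Proof.
move=> D; apply/eq_in_map => x; rewrite mem_sl => /mapP [y]; rewrite mem_enum => yef ->.
rewrite !inS_val; move: yef; rewrite in_setU; case/orP => H.
- by rewrite H (disjointFr D H).
- by rewrite H (disjointFl D H).
Qed.

End SetGlue.

Section Pair.
Variable n : nat.
Variable ts : seq nat.
Hypothesis Hpos : all (fun t => 0 < t) ts.
Implicit Types (e f E : {set 'I_n}).

Lemma ts_pos i : i < size ts -> 0 < nth 0 ts i.
Proof. by move=> Hi; move/allP: Hpos; apply; apply: mem_nth. Qed.

Lemma cc_lt_sum i : i < size ts -> cc ts i < sumn ts.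
Proof.
move=> Hi; have := ccSn Hi; have := cc_le_sum ts i.+1; have := ts_pos Hi; lia.
Qed.

Lemma bidx_cc i : i < size ts -> bidx ts (cc ts i) = i.
Proof. by move=> Hi; have := bidx_cu Hi (ts_pos Hi); rewrite addn0. Qed.

Definition before f e i := el f (cc ts i) < el e (cc ts i).

Section Core.
Variables (e f : {set 'I_n}) (os' : seq bool).
Hypotheses (Hs : size ts = size os') (He : #|e| = sumn ts) (Hf : #|f| = sumn ts)
  (D : [disjoint e & f]) (Hw : [seq inS e x | x <- sl (e :|: f)] = word ts os').

Lemma cnt_core j : j < sumn ts ->
  cnt f (el e j) = cc ts (bidx ts j) + ~~ nth true os' (bidx ts j) * nth 0 ts (bidx ts j).
Proof.
move=> Hj; have := fa_pat D; rewrite Hw => Hfa.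
rewrite -fa_word // Hfa (nth_map 0) // size_sl; lia.
Qed.

Lemma before_core i : i < size ts -> before f e i = ~~ nth true os' i.
Proof.
move=> Hi; rewrite /before el_lt_cnt; last by rewrite Hf; exact: cc_lt_sum.
rewrite cnt_core ?cc_lt_sum // bidx_cc //; have := ts_pos Hi.
by case: (nth true os' i) => /=; lia.
Qed.
End Core.

Lemma pair_lemma e f os : size ts = size os -> nth true os 0 = true ->
  #|e| = sumn ts -> #|f| = sumn ts -> [disjoint e & f] ->
  pattern_of e f = word ts os ->
  (forall j, j < sumn ts -> cnt f (el e j) =
      cc ts (bidx ts j) + before f e (bidx ts j) * nth 0 ts (bidx ts j)) /\
  (forall i, i < size ts -> before f e i = (before f e 0 == nth true os i)).
Proof.
move=> Hs Ho0 He Hf D Hp.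
suff [os' [Hs' Hw Hrel]] : exists os', [/\ size ts = size os',
     [seq inS e x | x <- sl (e :|: f)] = word ts os' &
     forall i, i < size ts -> ~~ nth true os' i = (~~ nth true os' 0 == nth true os i)].
  split.
  - move=> j Hj; rewrite (cnt_core Hs' He Hf D Hw Hj) (before_core Hs' He Hf D Hw) //.
    exact: bidx_lt.
  - move=> i Hi; have H0 : 0 < size ts by case: (size ts) Hi.
    rewrite !(before_core Hs' He Hf D Hw) //; exact: Hrel.
move: Hp; rewrite pattern_ofE; case: ifP => _ Hp.
- exists os; split => // i Hi; rewrite Ho0 /=; by case: (nth true os i).
- exists (map negb os); split; first by rewrite size_map.
  + by rewrite -(negb_pat D) map_comp Hp negb_word.
  + move=> i Hi; have H0 : 0 < size ts by case: (size ts) Hi.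
    rewrite !(nth_map true) -?Hs // Ho0 /=; by case: (nth true os i).
Qed.
End Pair.

Lemma count_iota_lt m N : m <= N -> count (fun x => x < m) (iota 0 N) = m.
Proof.
move=> H; rewrite -(subnKC H) iotaD count_cat add0n.
rewrite (eq_in_count (a2 := predT)); last by move=> x; rewrite mem_iota.
rewrite count_predT size_iota (eq_in_count (a2 := pred0)); last first.
  by move=> x; rewrite mem_iota /=; lia.
by rewrite count_pred0 addn0.
Qed.

Lemma lin_cmp t a b u v : u < t -> v < t -> a != b -> (t * a + u < t * b + v) = (a < b).
Proof.
move=> Hu Hv Hab; case: (ltngtP a b) => H.
- have : t * a.+1 <= t * b by rewrite leq_mul2l H orbT.
  rewrite mulnS; lia.
- have : t * b.+1 <= t * a by rewrite leq_mul2l H orbT.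
  rewrite mulnS; lia.
- by rewrite H eqxx in Hab.
Qed.

Section Elm.
Variables (r k : nat) (ts : seq nat).
Hypothesis Hpos : all (fun t => 0 < t) ts.
Hypothesis Hr : sumn ts = r.
Local Notation n := (r * k).
Local Notation bi j := (bidx ts j).
Local Notation ci j := (cc ts (bidx ts j)).
Local Notation ti j := (nth 0 ts (bidx ts j)).

Definition elm (key : nat -> nat) j := k * ci j + ti j * key (bi j) + (j - ci j).

Definition bounded (key : nat -> nat) := forall i, i < size ts -> key i < k.

Lemma bi_lt j : j < r -> bi j < size ts.
Proof. by rewrite -Hr; apply: bidx_lt. Qed.
Lemma ci_le j : ci j <= j.
Proof. exact: cc_bidx_le. Qed.
Lemma j_lt_ci j : j < r -> j < ci j + ti j.
Proof. move=> Hj; rewrite -ccSn ?bi_lt //; apply: bidx_lt_next; by rewrite Hr. Qed.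

Lemma elm_lb key j : k * ci j <= elm key j.
Proof. by rewrite /elm -addnA leq_addr. Qed.

Lemma elm_ub key j : bounded key -> j < r -> elm key j < k * cc ts (bi j).+1.
Proof.
move=> Hb Hj; rewrite ccSn ?bi_lt // mulnDr /elm.
have Hk := Hb _ (bi_lt Hj).
have : ti j * (key (bi j)).+1 <= ti j * k by rewrite leq_mul2l Hk orbT.
have := j_lt_ci Hj; have := ci_le j.
rewrite mulnS (mulnC k (ti j)); lia.
Qed.

Lemma elm_lt_n key j : bounded key -> j < r -> elm key j < n.
Proof.
move=> Hb Hj; apply: (leq_trans (elm_ub Hb Hj)); rewrite mulnC leq_mul2r.
by rewrite -Hr cc_le_sum orbT.
Qed.

Lemma elm_cmp key1 key2 j j' : bounded key1 -> bounded key2 ->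
  (forall i, i < size ts -> key1 i != key2 i) -> j < r -> j' < r ->
  (elm key2 j' < elm key1 j) = (bi j' < bi j) || (bi j' == bi j) && (key2 (bi j) < key1 (bi j)).
Proof.
move=> Hb1 Hb2 Hne Hj Hj'; case: (ltngtP (bi j') (bi j)) => H /=.
- apply: (leq_trans (elm_ub Hb2 Hj')); apply: (leq_trans _ (elm_lb _ _)).
  by rewrite leq_mul2l cc_mono ?orbT.
- apply/negbTE; rewrite -leqNgt; apply: ltnW.
  apply: (leq_trans (elm_ub Hb1 Hj)); apply: (leq_trans _ (elm_lb _ _)).
  by rewrite leq_mul2l cc_mono ?orbT.
- rewrite /elm H -!addnA ltn_add2l lin_cmp //.
  + by have := j_lt_ci Hj'; have := ci_le j'; rewrite H; lia.
  + by have := j_lt_ci Hj; have := ci_le j; lia.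
  + by rewrite eq_sym Hne // bi_lt.
Qed.

Lemma elm_mono key j j' : bounded key -> j' < r -> j < j' -> elm key j < elm key j'.
Proof.
move=> Hb Hj' Hjj; have Hj : j < r by lia.
case: (ltngtP (bi j) (bi j')) => H.
- apply: (leq_trans (elm_ub Hb Hj)); apply: (leq_trans _ (elm_lb _ _)).
  by rewrite leq_mul2l cc_mono ?orbT.
- exfalso; have := cc_bidx_le ts j; have := bidx_lt_next (j := j') (ts := ts).
  rewrite Hr => /(_ Hj') H1 H2; have := cc_mono ts H; lia.
- have := ci_le j; rewrite /elm H; lia.
Qed.

Definition Ek key : {set 'I_n} := [set x | val x \in [seq elm key j | j <- iota 0 r]].

Lemma sl_Ek key : bounded key -> sl (Ek key) = [seq elm key j | j <- iota 0 r].
Proof.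
move=> Hb; apply: (irr_sorted_eq ltn_trans ltnn).
- exact: sl_sorted.
- apply: (homo_sorted_in (P := fun j => j < r)).
  + by move=> x y _ Hy; apply: elm_mono.
  + by apply/allP => x; rewrite mem_iota.
  + exact: iota_ltn_sorted.
move=> x; rewrite mem_sl /inS; apply/mapP/idP.
- by move=> [y]; rewrite mem_enum inE => H ->.
- move=> Hx; have : x < n.
    by move: Hx => /mapP [j]; rewrite mem_iota => /andP[_ Hj] ->; apply: elm_lt_n.
  move=> Hxn; exists (Ordinal Hxn) => //; by rewrite mem_enum inE.
Qed.

Lemma card_Ek key : bounded key -> #|Ek key| = r.
Proof. by move=> Hb; rewrite -size_sl sl_Ek // size_map size_iota. Qed.

Lemma el_Ek key j : bounded key -> j < r -> el (Ek key) j = elm key j.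
Proof. by move=> Hb Hj; rewrite /el sl_Ek // (nth_map 0) ?size_iota // nth_iota. Qed.

Lemma cnt_Ek key1 key2 j : bounded key1 -> bounded key2 ->
  (forall i, i < size ts -> key1 i != key2 i) -> j < r ->
  cnt (Ek key2) (elm key1 j) = ci j + (key2 (bi j) < key1 (bi j)) * ti j.
Proof.
move=> Hb1 Hb2 Hne Hj; rewrite cnt_count sl_Ek // count_map.
have Hbi := bi_lt Hj.
rewrite (eq_in_count (a2 := fun j' => j' < if key2 (bi j) < key1 (bi j) then cc ts (bi j).+1
                                           else ci j)); last first.
  move=> j'; rewrite mem_iota add0n => /= Hj'; rewrite elm_cmp //.
  have Hj'r : j' < sumn ts by rewrite Hr.
  case: ifP => HB; rewrite ?andbT ?andbF ?orbF.
  + by rewrite -(bidx_ltE (i := (bi j).+1) Hj'r) // ltnS [in RHS]leq_eqVlt orbC.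
  + by rewrite -(bidx_ltE (i := bi j) Hj'r) // ltnW.
rewrite count_iota_lt; last by case: ifP => _; rewrite -Hr cc_le_sum.
by case: ifP => _; rewrite ?ccSn //= ?mul1n ?mul0n ?addn0.
Qed.

Lemma disj_Ek key1 key2 : bounded key1 -> bounded key2 ->
  (forall i, i < size ts -> key1 i != key2 i) -> [disjoint Ek key1 & Ek key2].
Proof.
move=> Hb1 Hb2 Hne; rewrite -setI_eq0; apply/eqP/setP => x; rewrite !inE.
apply/negbTE/negP => /andP[].
move=> /mapP [j]; rewrite mem_iota add0n => /andP[_ Hj] Ex.
move=> /mapP [j']; rewrite mem_iota add0n => /andP[_ Hj'] Ex'.
have /eqP : elm key1 j = elm key2 j' by rewrite -Ex -Ex'.
rewrite eqn_leq => /andP[H1 H2].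
have Hne' : forall i, i < size ts -> key2 i != key1 i by move=> i Hi; rewrite eq_sym Hne.
move: H1 H2; rewrite leqNgt (elm_cmp Hb1 Hb2 Hne Hj Hj') => H1.
rewrite leqNgt (elm_cmp Hb2 Hb1 Hne' Hj' Hj) => H2.
have := Hne _ (bi_lt Hj).
move: H1 H2; case: (ltngtP (bi j') (bi j)) => [//|//|H].
rewrite H => H1 H2 Hn.
case: (ltngtP (key1 (bi j)) (key2 (bi j))) => [E|E|E].
- by rewrite E in H2.
- by rewrite E in H1.
- by rewrite E eqxx in Hn.
Qed.

End Elm.

Lemma sl_inj n (e f : {set 'I_n}) : sl e = sl f -> e = f.
Proof.
move=> H; apply/setP => x; by rewrite -!inS_val -!mem_sl H.
Qed.

Lemma sum_ord_lt n a : a <= n -> \sum_(x : 'I_n) (val x < a) = a.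
Proof.
move=> Han; transitivity (\sum_(0 <= i < n) (i < a)); first by rewrite big_mkord.
rewrite (big_cat_nat (n := a)) //=.
rewrite (eq_big_nat _ _ (F2 := fun=> 1)); last by move=> i /andP[_ ->].
rewrite [X in _ + X](eq_big_nat _ _ (F2 := fun=> 0)); last first.
  by move=> i /andP[H _]; rewrite ltnNge H.
by rewrite sum_nat_const_nat big1_eq muln1 subn0 addn0.
Qed.

Section Clique.
Variables (r k : nat) (ts : seq nat) (oP oQ : seq bool).
Hypothesis Hpos : all (fun t => 0 < t) ts.
Hypothesis Hr : sumn ts = r.
Hypotheses (HsP : size ts = size oP) (HsQ : size ts = size oQ).
Hypotheses (HP0 : nth true oP 0 = true) (HQ0 : nth true oQ 0 = true).
Local Notation n := (r * k).
Variable M : {set {set 'I_n}}.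
Hypothesis Hm : is_matching M.
Hypothesis Hc : is_clique2 (word ts oP) (word ts oQ) M.

Lemma cardM : #|M| = k.
Proof. by case/and3P: Hm => _ _ /eqP. Qed.
Lemma cardE e : e \in M -> #|e| = r.
Proof. by case/and3P: Hm => /forall_inP H _ _ /H /eqP. Qed.
Lemma disjM e f : e \in M -> f \in M -> e != f -> [disjoint e & f].
Proof.
case/and3P: Hm => _ /forall_inP H _ eM fM; move: (H e eM) => /forall_inP /(_ f fM).
by move/implyP.
Qed.

Lemma sum_le1 x : \sum_(f in M) (x \in f) <= 1.
Proof.
case: (pickP [pred f in M | x \in f]) => [f0 /andP[f0M xf0] | H].
- rewrite (big_setD1 f0 f0M) xf0 /= big1 // => f; rewrite in_setD1 => /andP[ff0 fM].
  suff -> : (x \in f) = false by []. apply/negP => xf; have := disjM fM f0M ff0.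
  by move/disjointFr => /(_ x xf); rewrite xf0.
- by rewrite big1 // => f fM; have := H f; rewrite /= fM /= => ->.
Qed.

Lemma cover x : \sum_(f in M) (x \in f) = 1.
Proof.
pose g y := \sum_(f in M) (y \in f).
have Htot : \sum_(y : 'I_n) g y = n.
  rewrite /g exchange_big /= (eq_bigr (fun=> r)); last first.
    by move=> f fM; rewrite -big_mkcond sum1_card cardE.
  by rewrite sum_nat_const cardM mulnC.
have H1 : \sum_(y : 'I_n) (1 - g y) = 0.
  have : \sum_(y : 'I_n) g y + \sum_(y : 'I_n) (1 - g y) = n.
    rewrite -big_split /= (eq_bigr (fun=> 1)); last by move=> y _; have := sum_le1 y; rewrite /g; lia.
    by rewrite sum1_card card_ord.
  rewrite Htot; lia.
move/eqP: H1; rewrite sum_nat_eq0 => /forallP /(_ x) /=.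
have := sum_le1 x; rewrite /g; set S := \sum_(f in M) _ => H3 /eqP H4. by apply/eqP; rewrite eqn_leq H3 -subn_eq0 H4.
Qed.

Lemma sum_cnt a : a <= n -> \sum_(f in M) cnt f a = a.
Proof.
move=> Ha; rewrite -[RHS](sum_ord_lt Ha).
transitivity (\sum_(f in M) \sum_(x : 'I_n) ((x \in f) * (val x < a))).
  apply: eq_bigr => f _; rewrite /cnt big_mkcond; apply: eq_bigr => x _. by case: (x \in f); rewrite ?mul1n ?mul0n.
rewrite exchange_big /=; apply: eq_bigr => x _.
by rewrite -big_distrl /= cover mul1n.
Qed.

Definition R i e := \sum_(f in M :\ e) before ts f e i.

Lemma pairM e f : e \in M -> f \in M -> e != f ->
  exists os, (os = oP \/ os = oQ) /\
  ((forall j, j < r -> cnt f (el e j) =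
      cc ts (bidx ts j) + before ts f e (bidx ts j) * nth 0 ts (bidx ts j)) /\
   (forall i, i < size ts -> before ts f e i = (before ts f e 0 == nth true os i))).
Proof.
move=> eM fM ef; have D := disjM eM fM ef.
have He : #|e| = sumn ts by rewrite Hr cardE.
have Hf : #|f| = sumn ts by rewrite Hr cardE.
have := Hc; move/forall_inP => /(_ e eM) /forall_inP /(_ f fM) /implyP /(_ ef).
rewrite !inE => /orP[] /eqP Hp.
- exists oP; split; first by left.
  have [H1 H2] := pair_lemma Hpos (e := e) (f := f) (os := oP) HsP HP0
    He Hf D Hp.
  by split => // j Hj; apply: H1; rewrite Hr.
- exists oQ; split; first by right.
  have [H1 H2] := pair_lemma Hpos (e := e) (f := f) (os := oQ) HsQ HQ0
    He Hf D Hp.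
  by split => // j Hj; apply: H1; rewrite Hr.
Qed.

Lemma card_MD1 e : e \in M -> #|M :\ e| = k.-1.
Proof. by move=> eM; have := cardsD1 e M; rewrite eM cardM; lia. Qed.

Lemma el_lt_n e j : e \in M -> j < r -> el e j < n.
Proof.
move=> eM Hj; have [y _ <-] := el_mem (E := e) (j := j) ltac:(by rewrite cardE).
exact: ltn_ord.
Qed.

Lemma el_formula e j : e \in M -> j < r -> el e j = elm k ts (fun i => R i e) j.
Proof.
move=> eM Hj.
have Ha := ltnW (el_lt_n eM Hj).
rewrite -{1}(sum_cnt Ha) (big_setD1 e eM) cnt_el ?cardE //=.
rewrite (eq_bigr (fun f => cc ts (bidx ts j) + before ts f e (bidx ts j) * nth 0 ts (bidx ts j))); last first.
  move=> f; rewrite in_setD1 => /andP[fe fM].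
  have [os [_ [H _]]] := pairM eM fM ltac:(by rewrite eq_sym).
  exact: H.
rewrite big_split /= sum_nat_const card_MD1 // -big_distrl /= /elm -/(R _ e).
have Hk : 0 < k by have := cardM; rewrite (cardD1 e) eM; lia.
have := cc_bidx_le ts j.
have -> : k = (k.-1).+1 by lia.
rewrite mulSn (mulnC (nth 0 ts _)); lia.
Qed.

Lemma R_le i e : e \in M -> R i e <= k.-1.
Proof.
move=> eM; rewrite -(card_MD1 eM) -sum1_card /R; apply: leq_sum => f _.
by case: (before _ _ _ _).
Qed.

Lemma R_rel e i i' b : e \in M ->
  (forall f, f \in M :\ e -> before ts f e i = (before ts f e i' == b)) ->
  R i e = if b then R i' e else k.-1 - R i' e.
Proof.
move=> eM H; transitivity (\sum_(f in M :\ e) (before ts f e i' == b)).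
  by apply: eq_bigr => f /H ->.
case: (b).
- by apply: eq_bigr => f _; case: (before _ _ _ _).
- have : \sum_(f in M :\ e) (before ts f e i' == false) + \sum_(f in M :\ e) before ts f e i' = k.-1.
    rewrite -big_split /= -(card_MD1 eM) -sum1_card; apply: eq_bigr => f _.
    by case: (before _ _ _ _).
  by move=> <-; rewrite /R addnK.
Qed.

Lemma R_agree e i : e \in M -> i < size ts -> nth true oP i = nth true oQ i ->
  R i e = if nth true oP i then R 0 e else k.-1 - R 0 e.
Proof.
move=> eM Hi Hag; apply: R_rel => // f; rewrite in_setD1 => /andP[fe fM].
have [os [Hos [_ H]]] := pairM eM fM ltac:(by rewrite eq_sym).
by rewrite H //; case: Hos => ->; rewrite ?Hag.
Qed.

Lemma R_disagree e i d : e \in M -> i < size ts -> d < size ts ->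
  nth true oP i != nth true oQ i -> nth true oP d != nth true oQ d ->
  R i e = if nth true oP i == nth true oP d then R d e else k.-1 - R d e.
Proof.
move=> eM Hi Hd Hi' Hd'; apply: R_rel => // f; rewrite in_setD1 => /andP[fe fM].
have [os [Hos [_ H]]] := pairM eM fM ltac:(by rewrite eq_sym).
rewrite (H i Hi) (H d Hd).
case: Hos => ->; move: Hi' Hd'; case: (nth true oP i); case: (nth true oQ i);
  case: (nth true oP d); case: (nth true oQ d); case: (before ts f e 0) => //.
Qed.

Lemma cc_lt_r i : i < size ts -> cc ts i < r.
Proof. rewrite -Hr; exact: cc_lt_sum. Qed.

Lemma el_cc e i : e \in M -> i < size ts -> el e (cc ts i) = k * cc ts i + nth 0 ts i * R i e.
Proof.
move=> eM Hi; rewrite el_formula ?cc_lt_r // /elm bidx_cc //; lia.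
Qed.

Lemma R_inj i e f : e \in M -> f \in M -> i < size ts -> R i e = R i f -> e = f.
Proof.
move=> eM fM Hi HR; apply/eqP; apply/negPn/negP => ef.
have Hcc := cc_lt_r Hi.
have [y ye Hy] := el_mem (E := e) (j := cc ts i) ltac:(by rewrite cardE).
have [z zf Hz] := el_mem (E := f) (j := cc ts i) ltac:(by rewrite cardE).
have yz : y = z by apply: val_inj; rewrite Hy Hz !el_cc // HR.
have D := disjM eM fM ef.
by have := disjointFr D ye; rewrite yz zf.
Qed.

End Clique.

Section PatWord.
Variable n : nat.
Implicit Types (e f : {set 'I_n}).

Lemma pattern_of_sym e f : [disjoint e & f] -> pattern_of e f = pattern_of f e.
Proof.
move=> D; rewrite !pattern_ofE setUC.
set s := sl (f :|: e).
case: (boolP (head 0 s \in [seq val y | y <- enum e])) => He;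
  case: (boolP (head 0 s \in [seq val y | y <- enum f])) => Hf //.
- exfalso; move: He Hf => /mapP [y]; rewrite mem_enum => ye -> /mapP [z].
  rewrite mem_enum => zf /val_inj yz; have := disjointFr D ye; by rewrite yz zf.
- (* head in neither: then s is empty *)
  have Hs : s = [::].
    case Es: s => [|x s'] //; exfalso.
    have : x \in s by rewrite Es mem_head.
    rewrite mem_sl => /mapP [y]; rewrite mem_enum in_setU => /orP[] H Hx.
    + by move: Hf; rewrite Es /= Hx (mem_map val_inj) mem_enum H.
    + by move: He; rewrite Es /= Hx (mem_map val_inj) mem_enum H.
  by rewrite Hs.
Qed.

Lemma count_inS_f e f : [disjoint e & f] -> count (inS f) (sl (e :|: f)) = #|f|.
Proof.
move=> D; rewrite count_sl -sum1_card big_mkcond [RHS]big_mkcond /=.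
apply: eq_bigr => x _; rewrite inS_val in_setU.
by case: (x \in e); case: (x \in f).
Qed.

Lemma pat_word ts os e f : all (fun t => 0 < t) ts -> size ts = size os ->
  [disjoint e & f] -> #|e| = sumn ts -> #|f| = sumn ts -> 0 < sumn ts ->
  (forall j, j < sumn ts -> cnt f (el e j) =
     cc ts (bidx ts j) + ~~ nth true os (bidx ts j) * nth 0 ts (bidx ts j)) ->
  0 < cnt e (el f 0) ->
  pattern_of e f = word ts os.
Proof.
move=> Hpos Hs D He Hf Hr Hcnt Hc0.
have Hp : pattern_of e f = [seq inS e x | x <- sl (e :|: f)].
  rewrite pattern_ofE; case: ifP => // Hn; exfalso.
  have : 0 < size (sl (e :|: f)).
    rewrite size_sl; apply: (leq_trans _ (subset_leq_card (subsetUr e f))); by rewrite Hf.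
  case Es: (sl (e :|: f)) => [|x s'] // _.
  have : x \in sl (e :|: f) by rewrite Es mem_head.
  rewrite mem_sl => /mapP [y]; rewrite mem_enum in_setU => Hy Hx.
  move: Hn; rewrite Es /= Hx (mem_map val_inj) mem_enum => Hye.
  rewrite Hye /= in Hy.
  have D' : [disjoint f & e] by rewrite disjoint_sym.
  have := fa_pat D'; rewrite setUC Es /=.
  rewrite Hx inS_val Hy.
  have : 0 < size (sl f) by rewrite size_sl Hf.
  rewrite /el in Hc0.
  case Ef: (sl f) Hc0 => [|z l] //= H0 _ []. move=> H1; by rewrite -H1 in H0.
rewrite Hp; apply: fa_inj.
- rewrite fa_pat //; apply: (@eq_from_nth _ 0).
  + by rewrite size_map size_fa cid_word // size_sl He.
  + move=> j; rewrite size_map size_sl He => Hj.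
    by rewrite (nth_map 0) ?size_sl ?He // Hcnt // fa_word.
- rewrite cnegb_word // count_map -He.
  rewrite (eq_in_count (a2 := inS f)) ?count_inS_f ?Hf ?He //.
  move=> x; rewrite mem_sl => /mapP [y]; rewrite mem_enum in_setU => Hy -> /=.
  rewrite !inS_val; case/orP: Hy => H.
  + by rewrite H (disjointFr D H).
  + by rewrite H (disjointFl D H).
Qed.
End PatWord.

Definition keyf (k : nat) (oP oQ : seq bool) (p : nat -> nat) (m i : nat) : nat :=
  if nth true oP i == nth true oQ i then (if nth true oP i then m else k.-1 - m)
  else (if nth true oP i then p m else k.-1 - p m).

Section Main.
Variables (r k : nat) (ts : seq nat) (oP oQ : seq bool) (d : nat).
Hypothesis Hpos : all (fun t => 0 < t) ts.
Hypothesis Hr : sumn ts = r.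
Hypothesis Hr0 : 0 < r.
Hypotheses (HsP : size ts = size oP) (HsQ : size ts = size oQ).
Hypotheses (HP0 : nth true oP 0 = true) (HQ0 : nth true oQ 0 = true).
Hypotheses (Hd : d < size ts) (Hdd : nth true oP d != nth true oQ d).
Local Notation n := (r * k).

Lemma size_pos : 0 < size ts.
Proof. by case: (size ts) Hd. Qed.

Lemma elm_cc key i : i < size ts -> elm k ts key (cc ts i) = k * cc ts i + nth 0 ts i * key i.
Proof. by move=> Hi; rewrite /elm bidx_cc // subnn addn0. Qed.

Definition Phi (p : nat -> nat) : {set {set 'I_n}} :=
  [set Ek r k ts (keyf k oP oQ p (val m)) | m : 'I_k].

Section PhiSide.
Variable p : nat -> nat.
Hypothesis Hpk : forall x, x < k -> p x < k.
Hypothesis Hpi : forall x y, x < k -> y < k -> p x = p y -> x = y.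

Lemma bounded_keyf m : m < k -> bounded k ts (keyf k oP oQ p m).
Proof.
move=> Hm i _; have := Hpk Hm; rewrite /keyf.
case: (nth true oP i == nth true oQ i); case: (nth true oP i); lia.
Qed.

Lemma keyf_ne m m' : m < k -> m' < k -> m != m' -> forall i, keyf k oP oQ p m i != keyf k oP oQ p m' i.
Proof.
move=> Hm Hm' Hmm i; have Hp := Hpk Hm; have Hp' := Hpk Hm'.
have Hpp : p m != p m' by apply/eqP => E; move: Hmm; rewrite (Hpi Hm Hm' E) eqxx.
move: Hmm Hpp; rewrite /keyf.
case: (nth true oP i == nth true oQ i); case: (nth true oP i); move=> /eqP ? /eqP ?; apply/eqP; lia.
Qed.

Lemma keyf_cmp m m' i : m < m' -> m' < k ->
  (keyf k oP oQ p m' i < keyf k oP oQ p m i) = ~~ nth true (if p m < p m' then oP else oQ) i.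
Proof.
move=> Hmm Hm'; have Hm : m < k by lia.
have Hp := Hpk Hm; have Hp' := Hpk Hm'.
have Hpp : p m != p m' by apply/eqP => E; have := Hpi Hm Hm' E; lia.
rewrite /keyf; case: (ltngtP (p m) (p m')) => Hc; last by rewrite Hc eqxx in Hpp.
- case: (nth true oP i); case: (nth true oQ i) => /=; apply/idP/idP; lia.
- case: (nth true oP i); case: (nth true oQ i) => /=; apply/idP/idP; lia.
Qed.

Lemma Ek_ne m m' : m < k -> m' < k -> m != m' ->
  [disjoint Ek r k ts (keyf k oP oQ p m) & Ek r k ts (keyf k oP oQ p m')].
Proof.
move=> Hm Hm' Hmm; apply: disj_Ek => //; try exact: bounded_keyf.
by move=> i _; apply: keyf_ne.
Qed.

Lemma Ek_inj m m' : m < k -> m' < k ->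
  Ek r k ts (keyf k oP oQ p m) = Ek r k ts (keyf k oP oQ p m') -> m = m'.
Proof.
move=> Hm Hm' E; apply/eqP; apply/negPn/negP => Hmm.
have := Ek_ne Hm Hm' Hmm; rewrite E -setI_eq0 setIid => /eqP E0.
have := card_Ek Hpos Hr (bounded_keyf Hm'); rewrite E0 cards0; lia.
Qed.

Lemma Phi_matching : is_matching (Phi p).
Proof.
apply/and3P; split.
- apply/forall_inP => e /imsetP [m _ ->]; rewrite card_Ek //; exact: bounded_keyf (ltn_ord m).
- apply/forall_inP => e /imsetP [m _ ->]; apply/forall_inP => f /imsetP [m' _ ->].
  apply/implyP => Hne; apply: Ek_ne => //.
  - exact: ltn_ord.
  - exact: ltn_ord.
  - by apply/negP => /eqP E; rewrite E eqxx in Hne.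
- rewrite card_imset ?card_ord // => m m' /Ek_inj H. apply: val_inj; exact: H (ltn_ord m) (ltn_ord m').
Qed.

Lemma pat_Phi m m' : m < m' -> m' < k ->
  pattern_of (Ek r k ts (keyf k oP oQ p m)) (Ek r k ts (keyf k oP oQ p m')) =
  word ts (if p m < p m' then oP else oQ).
Proof.
move=> Hmm Hm'; have Hm : m < k by lia.
have Hb := bounded_keyf Hm; have Hb' := bounded_keyf Hm'.
have Hne : m != m' by apply/eqP => E; rewrite E ltnn in Hmm.
apply: pat_word => //.
- by case: (p m < p m').
- exact: Ek_ne.
- by rewrite card_Ek.
- by rewrite card_Ek.
- by rewrite Hr.
- move=> j Hj; rewrite Hr in Hj; rewrite el_Ek // cnt_Ek //; last by move=> i _; exact: keyf_ne.
  by rewrite keyf_cmp.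
- rewrite el_Ek // cnt_Ek //; last by move=> i _; rewrite eq_sym; exact: keyf_ne.
  have Hb0 : bidx ts 0 = 0 by have := bidx_cc Hpos size_pos; rewrite cc0.
  rewrite Hb0 cc0 /keyf HP0 HQ0 /= Hmm mul1n add0n; have := size_pos; exact: ts_pos Hpos 0.
Qed.

Lemma Phi_clique : is_clique2 (word ts oP) (word ts oQ) (Phi p).
Proof.
apply/forall_inP => e /imsetP [m _ ->]; apply/forall_inP => f /imsetP [m' _ ->].
apply/implyP => Hne.
have Hmm : val m != val m' by apply: contraNneq Hne => /val_inj ->.
case: (ltngtP (val m) (val m')) => H; last by rewrite H eqxx in Hmm.
- rewrite pat_Phi ?ltn_ord //; by case: ifP => _; rewrite !in_cons eqxx ?orbT.
- rewrite pattern_of_sym; last by apply: Ek_ne; rewrite ?ltn_ord // eq_sym.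
  rewrite pat_Phi ?ltn_ord //; by case: ifP => _; rewrite !in_cons eqxx ?orbT.
Qed.

End PhiSide.

Lemma Phi_inj p p' :
  (forall x, x < k -> p x < k) -> (forall x y, x < k -> y < k -> p x = p y -> x = y) ->
  (forall x, x < k -> p' x < k) -> (forall x y, x < k -> y < k -> p' x = p' y -> x = y) ->
  Phi p = Phi p' -> forall x, x < k -> p x = p' x.
Proof.
move=> Hpk Hpi Hpk' Hpi' E x Hx.
have : Ek r k ts (keyf k oP oQ p x) \in Phi p' by rewrite -E; apply/imsetP; exists (Ordinal Hx).
move=> /imsetP [m' _ Em].
have Hb := bounded_keyf Hpk Hx; have Hb' := bounded_keyf Hpk' (ltn_ord m').
have E0 : x = m'.
  have := congr1 (fun e => el e 0) Em => /=; rewrite !el_Ek // -(cc0 ts) !elm_cc ?size_pos //.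
  rewrite /keyf HP0 HQ0 /= => /eqP; rewrite eqn_add2l eqn_mul2l.
  by rewrite (negbTE (lt0n_neq0 (ts_pos Hpos size_pos))) /= => /eqP.
have := congr1 (fun e => el e (cc ts d)) Em => /=.
have Hcd : cc ts d < r by rewrite -Hr; exact: cc_lt_sum.
rewrite !el_Ek // !elm_cc // -E0 => /eqP; rewrite eqn_add2l eqn_mul2l.
rewrite (negbTE (lt0n_neq0 (ts_pos Hpos Hd))) /= => /eqP.
have := Hpk x Hx; have := Hpk' x Hx.
rewrite /keyf (negbTE Hdd); case: (nth true oP d); lia.
Qed.

Section CliqueSide.
Variable M : {set {set 'I_n}}.
Hypothesis Hm : is_matching M.
Hypothesis Hc : is_clique2 (word ts oP) (word ts oQ) M.

Local Notation R := (R ts M).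

Hypothesis Hk : 0 < k.

Definition sR := [seq R 0 e | e <- enum M].

Lemma R0_inj : {in M &, injective (R 0)}.
Proof. move=> e f eM fM; exact: (R_inj Hpos Hr HsP HsQ HP0 HQ0 Hm Hc eM fM size_pos). Qed.

Lemma R_lt i e : e \in M -> R i e < k.
Proof. move=> eM; have := R_le Hpos Hr HsP HsQ HP0 HQ0 Hm Hc i eM; lia. Qed.

Lemma in_sR m : m < k -> m \in sR.
Proof.
move=> Hm'.
have Hu : uniq sR.
  rewrite map_inj_in_uniq ?enum_uniq // => e f; rewrite !mem_enum; exact: R0_inj.
have Hsub : {subset sR <= iota 0 k}.
  move=> x /mapP [e]; rewrite mem_enum => eM ->; rewrite mem_iota /=; exact: R_lt.
have Hs : size (iota 0 k) <= size sR.
  by rewrite size_iota size_map -(fintype.cardE M) (cardM Hm).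
have [_ H] := uniq_min_size Hu Hsub Hs.
by rewrite H mem_iota.
Qed.

Definition eof m := nth set0 (enum M) (index m sR).

Lemma eof_in m : m < k -> eof m \in M.
Proof.
move=> Hm'; rewrite /eof -mem_enum; apply: mem_nth.
by rewrite -(size_map (R 0)) index_mem in_sR.
Qed.

Lemma R0_eof m : m < k -> R 0 (eof m) = m.
Proof.
move=> Hm'; rewrite /eof -(nth_map _ (R 0 set0)); first by rewrite nth_index // in_sR.
by rewrite -(size_map (R 0)) index_mem in_sR.
Qed.

Definition pM m := if nth true oP d then R d (eof m) else k.-1 - R d (eof m).

Lemma pM_lt m : m < k -> pM m < k.
Proof. move=> Hm'; have := R_lt d (eof_in Hm'); rewrite /pM; case: (nth true oP d); lia. Qed.

Lemma pM_inj m m' : m < k -> m' < k -> pM m = pM m' -> m = m'.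
Proof.
move=> H1 H2 E.
have : R d (eof m) = R d (eof m').
  move: E; have := R_lt d (eof_in H1); have := R_lt d (eof_in H2).
  rewrite /pM; case: (nth true oP d); lia.
move/(R_inj Hpos Hr HsP HsQ HP0 HQ0 Hm Hc (eof_in H1) (eof_in H2) Hd) => E'.
by rewrite -(R0_eof H1) -(R0_eof H2) E'.
Qed.

Lemma R_keyf e i : e \in M -> i < size ts -> R i e = keyf k oP oQ pM (R 0 e) i.
Proof.
move=> eM Hi; have He : eof (R 0 e) = e.
  apply: R0_inj => //; [exact: eof_in (R_lt 0 eM) | exact: R0_eof (R_lt 0 eM)].
rewrite /keyf /pM He.
case: (boolP (nth true oP i == nth true oQ i)) => Hag.
- by rewrite (R_agree Hpos Hr HsP HsQ HP0 HQ0 Hm Hc eM Hi (eqP Hag)).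
- rewrite (R_disagree Hpos Hr HsP HsQ HP0 HQ0 Hm Hc eM Hi Hd Hag Hdd).
  have := R_lt d eM.
  case: (nth true oP i); case: (nth true oP d) => /=; lia.
Qed.

Lemma e_is_Ek e : e \in M -> e = Ek r k ts (keyf k oP oQ pM (R 0 e)).
Proof.
move=> eM; have Hb := bounded_keyf pM_lt (R_lt 0 eM).
apply: sl_inj; apply: (@eq_from_nth _ 0).
- by rewrite !size_sl card_Ek // (cardE Hm eM).
move=> j; rewrite size_sl (cardE Hm eM) => Hj.
rewrite -/(el _ j) -/(el _ j) el_Ek // (el_formula Hpos Hr HsP HsQ HP0 HQ0 Hm Hc eM Hj) /elm.
rewrite R_keyf //; apply: bidx_lt; by rewrite Hr.
Qed.

Lemma M_Phi : M = Phi pM.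
Proof.
apply/eqP; rewrite eqEcard; apply/andP; split.
- apply/subsetP => e eM; apply/imsetP; exists (Ordinal (R_lt 0 eM)) => //.
  exact: e_is_Ek.
- by rewrite (cardM Hm); apply: (leq_trans (leq_imset_card _ _)); rewrite card_ord.
Qed.

End CliqueSide.
End Main.

Lemma split_word w bs : is_splitting w bs ->
  exists os, [/\ all (fun t => 0 < t) (composition_of bs),
                 size (composition_of bs) = size os & w = word (composition_of bs) os].
Proof.
elim: bs w => [|b bs IH] w [Hb Hw].
- by exists [::]; split => //; rewrite -Hw.
- have [|os [H1 H2 H3]] := IH (flatten bs).
    by split => // b' Hb'; apply: Hb; rewrite in_cons Hb' orbT.
  have [t Ht Hbt] := Hb b (mem_head _ _).
  have Hsz : (size b)./2 = t.
    by case: Hbt => ->; rewrite size_cat !size_nseq addnn half_double.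
  case: Hbt => Eb.
  + exists (true :: os); split => /=.
    * by rewrite Hsz Ht.
    * by rewrite H2.
    * by rewrite -Hw /= H3 Hsz Eb.
  + exists (false :: os); split => /=.
    * by rewrite Hsz Ht.
    * by rewrite H2.
    * by rewrite -Hw /= H3 Hsz Eb.
Qed.

Lemma Phi_ext r k ts oP oQ p p' : (forall x, x < k -> p x = p' x) ->
  Phi r k ts oP oQ p = Phi r k ts oP oQ p'.
Proof.
move=> H; apply: eq_imset => m /=; by rewrite /keyf H.
Qed.

Lemma vinordK n x : x <= n -> \val (@inord n x) = x.
Proof. exact: inordK. Qed.

Theorem mainTheorem10 (r : nat) (P Q : seq bool) :
  2 <= r -> is_pattern r P -> is_pattern r Q -> harmonious P Q ->
  forall k : nat, 1 <= k ->
    #|[set M : {set {set 'I_(r * k)}} | is_matching M && is_clique2 P Q M]| = k`!.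
Proof.
move=> Hr2 HPp HQp [PQ [bsP [bsQ [SP SQ Hcomp]]]] k Hk.
have [oP [Hpos HsP EP]] := split_word SP.
have [oQ [_ HsQ EQ]] := split_word SQ.
set ts := composition_of bsP in Hpos HsP EP.
rewrite -Hcomp -/ts in HsQ EQ.
have Hr : sumn ts = r.
  by move: HPp => /and3P [_ /eqP <- _]; rewrite EP cid_word.
have Hr0 : 0 < r by lia.
have Hhead : forall o, size ts = size o -> head false (word ts o) -> nth true o 0 = true.
  move=> o; case: (ts) Hpos => [|t ts'] /=; first by case: o.
  move=> /andP [Ht _]; case: o => [|b o] //= _.
  by case: b; rewrite /blk; case: (t) Ht.
have HP0 : nth true oP 0 = true.
  by apply: Hhead => //; move: HPp => /and3P [_ _]; rewrite EP.
have HQ0 : nth true oQ 0 = true.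
  by apply: Hhead => //; move: HQp => /and3P [_ _]; rewrite EQ.
have [d Hd Hdd] : exists2 d, d < size ts & nth true oP d != nth true oQ d.
  have : ~~ all (fun i => nth true oP i == nth true oQ i) (iota 0 (size ts)).
    apply/negP => /allP H; apply: PQ; rewrite EP EQ; congr word.
    apply: (@eq_from_nth _ true); first by rewrite -HsP -HsQ.
    move=> i Hi; apply/eqP; apply: H; rewrite mem_iota /=; by rewrite HsP.
  case/allPn => d; rewrite mem_iota /= => Hd Hdd; by exists d.
subst P Q.
case: k Hk => [//|k'] _.
set k := k'.+1.
pose pf (π : {perm 'I_k}) (x : nat) : nat := val (π (inord x)).
have pf_lt : forall π x, x < k -> pf π x < k by move=> π x _; exact: ltn_ord.
have pf_inj : forall π x y, x < k -> y < k -> pf π x = pf π y -> x = y.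
  move=> π x y Hx Hy /val_inj /perm_inj /(congr1 (@nat_of_ord _)) /=; rewrite !inordK //.
have Hset : [set M : {set {set 'I_(r * k)}} | is_matching M && is_clique2 (word ts oP) (word ts oQ) M]
          = [set Phi r k ts oP oQ (pf π) | π : {perm 'I_k}].
  apply/setP => M; rewrite inE; apply/andP/imsetP.
  - move=> [Hm Hc].
    have Hk0 : 0 < k by [].
    pose g (m : 'I_k) : 'I_k := inord (pM ts oP d M m).
    have g_inj : injective g.
      move=> m m' /(congr1 (@nat_of_ord _)); rewrite /g !inordK; try exact: (pM_lt Hpos Hr Hr0 HsP HsQ HP0 HQ0 Hd Hdd Hm Hc Hk0 (ltn_ord _)).
      move/(pM_inj Hpos Hr Hr0 HsP HsQ HP0 HQ0 Hd Hdd Hm Hc Hk0 (ltn_ord _) (ltn_ord _)).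
      exact: val_inj.
    exists (perm g_inj) => //.
    rewrite (M_Phi Hpos Hr Hr0 HsP HsQ HP0 HQ0 Hd Hdd Hm Hc Hk0); apply: Phi_ext => x Hx.
    rewrite /pf permE /g vinordK ?inordK //.
    exact: (pM_lt Hpos Hr Hr0 HsP HsQ HP0 HQ0 Hd Hdd Hm Hc Hk0 Hx).
  - move=> [π _ ->]; split.
    + exact: (Phi_matching Hpos Hr Hr0 HsP HsQ HP0 HQ0 Hd Hdd (pf_lt π) (pf_inj π)).
    + exact: (Phi_clique Hpos Hr Hr0 HsP HsQ HP0 HQ0 Hd Hdd (pf_lt π) (pf_inj π)).
rewrite Hset card_imset ?card_Sn // => π σ E.
apply/permP => y; apply: val_inj.
have := Phi_inj Hpos Hr Hr0 HsP HsQ HP0 HQ0 Hd Hdd (pf_lt π) (pf_inj π) (pf_lt σ) (pf_inj σ) E (ltn_ord y).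
by rewrite /pf inord_val.
Qed.
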